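(* For $\beta>2$ let $E_\beta(z)=\prod_{n=1}^\infty\Big(1-\frac{z}{n^\beta-i}\Big)$. Then there are constants $0<C_1\le C_2$ and $R>0$ such that $C_1|x|^{1/\beta}\le\log|E_\beta(x)|\le C_2|x|^{1/\beta}$ for all real $x$ with $|x|>R$. *)

(* Defs.v *)
From Stdlib Require Import Reals.
From Coquelicot Require Import Coquelicot.
Open Scope R_scope.

Definition zero_beta (beta : R) (n : nat) : C := (Rpower (INR n) beta, -1).

Fixpoint partial_prod (beta : R) (z : C) (N : nat) : C :=
  match N with
  | O => 1%C
  | S m => Cmult (partial_prod beta z m) (Cminus 1%C (Cdiv z (zero_beta beta (S m))))
  end.

Definition E_beta (beta : R) (z : C) : C :=
  @lim (CompleteNormedModule.CompleteSpace _ C_CompleteNormedModule)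
    (filtermap (partial_prod beta z) eventually).

(* Main.v *)
Require Import Defs.
From Stdlib Require Import Reals Lra Lia ZArith.
From Coquelicot Require Import Coquelicot.
Open Scope R_scope.


Lemma ln_le' x y : 0 < x -> x <= y -> ln x <= ln y.
Proof. intros Hx [H|H]. left; apply ln_increasing; auto. subst; lra. Qed.

Lemma exp_le' x y : x <= y -> exp x <= exp y.
Proof. intros [H|H]. left; apply exp_increasing; auto. subst; lra. Qed.

Lemma ln_le_sub1 z : 0 < z -> ln z <= z - 1.
Proof. intros Hz. pose proof (exp_ineq1_le (ln z)). rewrite exp_ln in H; lra. Qed.

Lemma ln1p_le u : 0 <= u -> ln (1 + u) <= u.
Proof. intros Hu. pose proof (ln_le_sub1 (1+u)). lra. Qed.

Lemma ln_nonneg x : 1 <= x -> 0 <= ln x.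
Proof. intros H. rewrite <- ln_1. apply ln_le'; lra. Qed.

Lemma ln_pos' x : 1 < x -> 0 < ln x.
Proof. intros H. rewrite <- ln_1. apply ln_increasing; lra. Qed.

Lemma INR_pos n : (1 <= n)%nat -> 0 < INR n.
Proof. intros H. apply lt_0_INR. lia. Qed.

Lemma INR_ge1 n : (1 <= n)%nat -> 1 <= INR n.
Proof. intros H. apply (le_INR 1). lia. Qed.

Fixpoint Sm (g : nat -> R) (N : nat) : R :=
  match N with O => 0 | Datatypes.S m => Sm g m + g (Datatypes.S m) end.

Lemma S_le g h N : (forall n, (1 <= n <= N)%nat -> g n <= h n) -> Sm g N <= Sm h N.
Proof.
  induction N; intros H; simpl. lra.
  assert (Sm g N <= Sm h N) by (apply IHN; intros; apply H; lia).
  assert (g (Datatypes.S N) <= h (Datatypes.S N)) by (apply H; lia). lra.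
Qed.

Lemma S_ext g h N : (forall n, (1 <= n <= N)%nat -> g n = h n) -> Sm g N = Sm h N.
Proof.
  intros H. apply Rle_antisym; apply S_le; intros n Hn; rewrite (H n Hn); lra.
Qed.

Lemma S_plus g h N : Sm (fun n => g n + h n) N = Sm g N + Sm h N.
Proof. induction N; simpl; lra. Qed.

Lemma S_minus g h N : Sm (fun n => g n - h n) N = Sm g N - Sm h N.
Proof. induction N; simpl; lra. Qed.

Lemma S_scal c g N : Sm (fun n => c * g n) N = c * Sm g N.
Proof. induction N; simpl. ring. rewrite IHN. ring. Qed.

Lemma S_const c N : Sm (fun _ => c) N = INR N * c.
Proof. induction N; simpl Sm. simpl; ring. rewrite IHN, S_INR. ring. Qed.

Lemma S_nonneg g N : (forall n, (1 <= n <= N)%nat -> 0 <= g n) -> 0 <= Sm g N.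
Proof.
  intros H. replace 0 with (Sm (fun _ => 0) N). apply S_le; auto.
  rewrite S_const; ring.
Qed.

Lemma S_split g a b : (a <= b)%nat ->
  (forall n, (a < n <= b)%nat -> 0 <= g n) -> Sm g a <= Sm g b.
Proof.
  intros Hab. induction Hab; intros H. lra.
  simpl. assert (Sm g a <= Sm g m) by (apply IHHab; intros; apply H; lia).
  assert (0 <= g (Datatypes.S m)) by (apply H; lia). lra.
Qed.

(* range sums: R g a b = sum_{a < n <= b} g n *)
Definition Rg (g : nat -> R) a b := Sm g b - Sm g a.

Lemma Rg_le g h a b : (a <= b)%nat -> (forall n, (a < n <= b)%nat -> g n <= h n) ->
  Rg g a b <= Rg h a b.
Proof.
  unfold Rg. intros Hab. induction Hab; intros H. lra.
  simpl. assert (Sm g m - Sm g a <= Sm h m - Sm h a) by (apply IHHab; intros; apply H; lia).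
  assert (g (Datatypes.S m) <= h (Datatypes.S m)) by (apply H; lia). lra.
Qed.

Lemma Rg_plus g h a b : Rg (fun n => g n + h n) a b = Rg g a b + Rg h a b.
Proof. unfold Rg. rewrite !S_plus. ring. Qed.
Lemma Rg_minus g h a b : Rg (fun n => g n - h n) a b = Rg g a b - Rg h a b.
Proof. unfold Rg. rewrite !S_minus. ring. Qed.
Lemma Rg_const c a b : Rg (fun _ => c) a b = (INR b - INR a) * c.
Proof. unfold Rg. rewrite !S_const. ring. Qed.
Lemma Rg_scal c g a b : Rg (fun n => c * g n) a b = c * Rg g a b.
Proof. unfold Rg. rewrite !S_scal. ring. Qed.

Lemma S_shift g c j : Sm (fun n => g (c + n)%nat) j = Sm g (c + j) - Sm g c.
Proof.
  induction j. simpl. rewrite Nat.add_0_r. ring.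
  simpl. rewrite IHj. replace (c + Datatypes.S j)%nat with (Datatypes.S (c + j)) by lia.
  simpl. ring.
Qed.

Lemma S_rev g c j : (j <= c - 1)%nat ->
  Sm (fun n => g (c - n)%nat) j = Sm g (c - 1) - Sm g (c - 1 - j).
Proof.
  induction j; intros Hj. simpl. rewrite Nat.sub_0_r. ring.
  simpl. rewrite IHj by lia.
  replace (c - 1 - j)%nat with (Datatypes.S (c - 1 - Datatypes.S j)) by lia.
  simpl. replace (c - Datatypes.S j)%nat with (Datatypes.S (c - 1 - Datatypes.S j)) by lia.
  ring.
Qed.

Definition h2 (n : nat) := / (INR n)^2.

Lemma h2_tail q p : (1 <= q <= p)%nat -> Rg h2 q p <= / INR q - / INR p.
Proof.
  intros [Hq Hqp]. unfold Rg. induction Hqp. lra.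
  change (Sm h2 (Datatypes.S m)) with (Sm h2 m + h2 (Datatypes.S m)). 
  assert (0 < INR m) by (apply INR_pos; lia).
  assert (h2 (Datatypes.S m) = / (INR m + 1)^2) by (unfold h2; rewrite S_INR; reflexivity).
  rewrite S_INR.
  assert (/ (INR m + 1)^2 <= / INR m - / (INR m + 1)).
  { apply Rmult_le_reg_l with (INR m * (INR m + 1)^2). nra.
    field_simplify; try lra; nra. }
  lra.
Qed.

Lemma h2_total N : Sm h2 N <= 2.
Proof.
  destruct N. simpl; lra.
  pose proof (h2_tail 1 (Datatypes.S N) ltac:(lia)). unfold Rg in H.
  assert (Sm h2 1 = 1) by (simpl; unfold h2; simpl; field).
  assert (0 < / INR (Datatypes.S N)) by (apply Rinv_0_lt_compat, INR_pos; lia).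
  replace (/ INR 1) with 1 in H by (simpl; field). lra.
Qed.

Lemma h2_nonneg n : 0 <= h2 n.
Proof. unfold h2. destruct n. simpl. rewrite Rmult_0_l, Rinv_0. lra.
  left. apply Rinv_0_lt_compat. apply pow_lt. apply INR_pos. lia. Qed.


Definition lf n := Sm (fun j => ln (INR j)) n.

Lemma lf_S n : lf (Datatypes.S n) = lf n + ln (INR (Datatypes.S n)).
Proof. reflexivity. Qed.

Lemma lf_lower k : INR k * ln (INR k) - INR k <= lf k.
Proof.
  induction k. simpl. unfold lf; simpl. lra.
  rewrite lf_S. destruct k.
  - simpl. unfold lf; simpl. rewrite ln_1. lra.
  - set (K := Datatypes.S k) in *.
    assert (HK: 0 < INR K) by (apply INR_pos; unfold K; lia).
    rewrite S_INR.
    assert (ln (INR K + 1) - ln (INR K) <= / INR K).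
    { replace (ln (INR K + 1) - ln (INR K)) with (ln ((INR K + 1) / INR K)).
      pose proof (ln_le_sub1 ((INR K + 1) / INR K)).
      assert (0 < (INR K + 1) / INR K) by (apply Rdiv_lt_0_compat; lra).
      replace ((INR K + 1) / INR K - 1) with (/ INR K) in H by (field; lra). lra.
      unfold Rdiv. rewrite ln_mult, ln_Rinv; try lra. apply Rinv_0_lt_compat; lra. }
    assert (INR K * (ln (INR K + 1) - ln (INR K)) <= 1).
    { apply Rmult_le_reg_l with (/ INR K). apply Rinv_0_lt_compat; lra.
      rewrite <- Rmult_assoc, Rinv_l by lra. lra. }
    nra.
Qed.

Lemma lf_mid N m : (m <= N)%nat -> 2 * lf N <= lf (N + m) + lf (N - m).
Proof.
  induction m; intros H.
  - rewrite Nat.add_0_r, Nat.sub_0_r. lra.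
  - specialize (IHm ltac:(lia)).
    replace (N + Datatypes.S m)%nat with (Datatypes.S (N + m)) by lia.
    rewrite lf_S.
    replace (N - m)%nat with (Datatypes.S (N - Datatypes.S m)) in IHm by lia.
    rewrite lf_S in IHm.
    assert (ln (INR (Datatypes.S (N - Datatypes.S m))) <= ln (INR (Datatypes.S (N + m)))).
    { apply ln_le'. apply INR_pos; lia. apply le_INR; lia. }
    lra.
Qed.

Definition Lq1 k n := ln (INR k - INR n) + ln (INR k + INR n) - 2 * ln (INR n).
Definition Lq2 m n := ln (INR n - INR m) + ln (INR n + INR m) - 2 * ln (INR n).

Lemma Lq1_sum k : (1 <= k)%nat -> Sm (Lq1 k) (k - 1) = lf (2*k - 1) - lf k - lf (k - 1).
Proof.
  intros Hk. unfold Lq1.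
  rewrite !S_minus, !S_plus, S_scal.
  assert (E1: Sm (fun n => ln (INR k - INR n)) (k-1) = Sm (fun n => ln (INR (k - n))) (k-1)).
  { apply S_ext. intros n Hn. rewrite minus_INR by lia. reflexivity. }
  assert (E2: Sm (fun n => ln (INR k + INR n)) (k-1) = Sm (fun n => ln (INR (k + n))) (k-1)).
  { apply S_ext. intros n Hn. rewrite plus_INR. reflexivity. }
  rewrite E1, E2.
  rewrite (S_rev (fun j => ln (INR j)) k (k-1)) by lia.
  rewrite (S_shift (fun j => ln (INR j)) k (k-1)).
  replace (k - 1 - (k - 1))%nat with 0%nat by lia.
  replace (k + (k - 1))%nat with (2 * k - 1)%nat by lia.
  unfold lf. simpl Sm at 2. ring.
Qed.

Lemma Lq2_sum m N : (m <= N)%nat ->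
  Rg (Lq2 m) m N = lf (N - m) + lf (N + m) - lf (2 * m) - 2 * lf N + 2 * lf m.
Proof.
  intros H. induction H.
  - unfold Rg. rewrite Nat.sub_diag. replace (m + m)%nat with (2 * m)%nat by lia.
    unfold lf at 1; simpl Sm. ring.
  - unfold Rg in *. simpl Sm at 1.
    replace (Datatypes.S m0 - m)%nat with (Datatypes.S (m0 - m)) by lia.
    replace (Datatypes.S m0 + m)%nat with (Datatypes.S (m0 + m)) by lia.
    rewrite !lf_S.
    unfold Lq2 at 2.
    rewrite <- (minus_INR (Datatypes.S m0) m) by lia.
    rewrite <- plus_INR.
    replace (Datatypes.S m0 - m)%nat with (Datatypes.S (m0 - m)) by lia.
    replace (Datatypes.S m0 + m)%nat with (Datatypes.S (m0 + m)) by lia.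
    lra.
Qed.

Lemma fact_comb k N : (1 <= k)%nat -> (k + 1 <= N)%nat ->
  -(3 * ln 2) <= Sm (Lq1 k) (k - 1) + Rg (Lq2 (k+1)) (k+1) N.
Proof.
  intros Hk HN. rewrite Lq1_sum, Lq2_sum by lia.
  pose proof (lf_mid N (k+1) HN).
  replace (2 * (k+1))%nat with (Datatypes.S (Datatypes.S (Datatypes.S (2*k-1)))) by lia.
  rewrite !lf_S.
  replace (k + 1)%nat with (Datatypes.S k) by lia.
  rewrite lf_S.
  assert (Ek: lf k = lf (k-1) + ln (INR k)).
  { replace k with (Datatypes.S (k-1)) at 1 3 by lia. rewrite lf_S. reflexivity. }
  replace (Datatypes.S (Datatypes.S (Datatypes.S (2 * k - 1)))) with (2*k+2)%nat by lia.
  replace (Datatypes.S (Datatypes.S (2 * k - 1))) with (2*k+1)%nat by lia.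
  replace (Datatypes.S (2 * k - 1)) with (2*k)%nat by lia.
  assert (Hk0: 0 < INR k) by (apply INR_pos; lia).
  assert (E1: ln (INR (2*k)) = ln 2 + ln (INR k)).
  { rewrite mult_INR. replace (INR 2) with 2 by (simpl; lra). rewrite ln_mult; lra. }
  assert (E2: ln (INR (2*k+2)) = ln 2 + ln (INR (Datatypes.S k))).
  { replace (2*k+2)%nat with (2 * Datatypes.S k)%nat by lia.
    rewrite mult_INR. replace (INR 2) with 2 by (simpl; lra).
    rewrite ln_mult; try lra. apply INR_pos; lia. }
  assert (E3: ln (INR (2*k+1)) <= ln (INR (2*k+2))).
  { apply ln_le'. apply INR_pos; lia. apply le_INR; lia. }
  replace (Datatypes.S k) with (k + 1)%nat in * by lia.
  lra.
Qed.


Definition av beta n := Rpower (INR n) beta.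
Definition rr a x := sqrt ((a - x)^2 + 1) / sqrt (a^2 + 1).

Lemma zb_neq0 beta n : zero_beta beta n <> 0%C.
Proof. unfold zero_beta. intros H. injection H. lra. Qed.

Lemma rr_pos a x : 0 < rr a x.
Proof. unfold rr. pose proof (pow2_ge_0 (a-x)); pose proof (pow2_ge_0 a). apply Rdiv_lt_0_compat; apply sqrt_lt_R0; lra. Qed.

Lemma Cmod_fac beta x n : Cmod (1 - RtoC x / zero_beta beta n)%C = rr (av beta n) x.
Proof.
  pose proof (zb_neq0 beta n) as Hz.
  replace (1 - RtoC x / zero_beta beta n)%C with ((zero_beta beta n - RtoC x) / zero_beta beta n)%C
    by (field; auto).
  rewrite Cmod_div by auto. unfold rr, Cmod, zero_beta, av. simpl.
  f_equal; f_equal; ring.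
Qed.

Lemma Cmod_xz beta x n : Cmod (RtoC x / zero_beta beta n)%C = Rabs x / sqrt ((av beta n)^2 + 1).
Proof.
  rewrite Cmod_div by apply zb_neq0. rewrite Cmod_R. unfold Cmod, zero_beta, av; simpl.
  f_equal; f_equal; ring.
Qed.

Lemma av_ge_sq beta n : 2 <= beta -> (1 <= n)%nat -> (INR n)^2 <= av beta n.
Proof.
  intros Hb Hn. unfold av, Rpower.
  assert (0 < INR n) by (apply INR_pos; auto).
  assert (0 <= ln (INR n)) by (apply ln_nonneg, INR_ge1; auto).
  replace ((INR n)^2) with (exp (2 * ln (INR n))).
  apply exp_le'. nra.
  replace (2 * ln (INR n)) with (ln (INR n) + ln (INR n)) by ring.
  rewrite exp_plus, exp_ln by lra. ring.
Qed.

Lemma av_pos beta n : (1 <= n)%nat -> 0 < av beta n.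
Proof. intros; unfold av, Rpower; apply exp_pos. Qed.

Lemma sqrt_sq1_ge a : 0 <= a -> a <= sqrt (a^2 + 1).
Proof. intros Ha. rewrite <- (sqrt_pow2 a Ha) at 1. apply sqrt_le_1_alt. lra. Qed.

Lemma rr_upper beta x n : (1 <= n)%nat -> rr (av beta n) x <= 1 + Rabs x / av beta n.
Proof.
  intros Hn. rewrite <- Cmod_fac.
  unfold Cminus. eapply Rle_trans. apply Cmod_triangle.
  rewrite Cmod_1. rewrite Cmod_opp. rewrite Cmod_xz.
  assert (0 < av beta n) by (apply av_pos; auto).
  pose proof (sqrt_sq1_ge (av beta n) ltac:(lra)).
  assert (Rabs x / sqrt (av beta n ^ 2 + 1) <= Rabs x / av beta n).
  { unfold Rdiv. apply Rmult_le_compat_l. apply Rabs_pos.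
    apply Rinv_le_contravar; lra. }
  lra.
Qed.

Definition PP beta x N := partial_prod beta (RtoC x) N.
Definition gg beta x n := ln (rr (av beta n) x).

Lemma PP_mod beta x N : Cmod (PP beta x N) = exp (Sm (gg beta x) N).
Proof.
  induction N. simpl. unfold PP; simpl. rewrite Cmod_1, exp_0. auto.
  unfold PP in *. simpl. rewrite Cmod_mult, IHN, Cmod_fac, exp_plus.
  unfold gg. rewrite exp_ln. auto. apply rr_pos.
Qed.

Lemma gg_upper beta x n : 2 <= beta -> (1 <= n)%nat -> gg beta x n <= Rabs x * h2 n.
Proof.
  intros Hb Hn. unfold gg. eapply Rle_trans. apply ln_le'. apply rr_pos. apply rr_upper; auto.
  eapply Rle_trans. apply ln1p_le. apply Rdiv_le_0_compat. apply Rabs_pos. apply av_pos; auto.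
  unfold h2, Rdiv. apply Rmult_le_compat_l. apply Rabs_pos.
  apply Rinv_le_contravar. apply pow_lt, INR_pos; auto. apply av_ge_sq; auto.
Qed.

Lemma PP_bound beta x N : 2 <= beta -> Cmod (PP beta x N) <= exp (2 * Rabs x).
Proof.
  intros Hb. rewrite PP_mod. apply exp_le'.
  eapply Rle_trans. apply (S_le _ (fun n => Rabs x * h2 n)). intros n Hn; apply gg_upper; auto; lia.
  rewrite S_scal. pose proof (h2_total N). pose proof (Rabs_pos x). nra.
Qed.

Lemma PP_step beta x N : 2 <= beta ->
  Cmod (PP beta x (Datatypes.S N) - PP beta x N) <= exp (2 * Rabs x) * Rabs x * h2 (Datatypes.S N).
Proof.
  intros Hb. unfold PP. simpl.
  replace (partial_prod beta x N * (1 - x / zero_beta beta (Datatypes.S N)) - partial_prod beta x N)%C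
    with (- (partial_prod beta x N * (x / zero_beta beta (Datatypes.S N))))%C by ring.
  rewrite Cmod_opp, Cmod_mult, Cmod_xz.
  pose proof (PP_bound beta x N Hb). unfold PP in H.
  assert (Rabs x / sqrt (av beta (Datatypes.S N) ^ 2 + 1) <= Rabs x * h2 (Datatypes.S N)).
  { unfold Rdiv, h2. apply Rmult_le_compat_l. apply Rabs_pos.
    apply Rinv_le_contravar. apply pow_lt, INR_pos; lia.
    eapply Rle_trans. apply av_ge_sq. exact Hb. lia. apply sqrt_sq1_ge.
    left; apply av_pos; lia. }
  rewrite Rmult_assoc. apply Rmult_le_compat; auto using Cmod_ge_0.
  apply Rdiv_le_0_compat. apply Rabs_pos. apply sqrt_lt_R0. pose proof (pow2_ge_0 (av beta (Datatypes.S N))). lra.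
Qed.

Lemma PP_diff beta x q p : 2 <= beta -> (q <= p)%nat ->
  Cmod (PP beta x p - PP beta x q) <= exp (2 * Rabs x) * Rabs x * Rg h2 q p.
Proof.
  intros Hb H. induction H.
  - unfold Rg. replace (PP beta x q - PP beta x q)%C with (RtoC 0) by ring. rewrite Cmod_0. lra.
  - replace (PP beta x (Datatypes.S m) - PP beta x q)%C with
      ((PP beta x (Datatypes.S m) - PP beta x m) + (PP beta x m - PP beta x q))%C by ring.
    eapply Rle_trans. apply Cmod_triangle.
    pose proof (PP_step beta x m Hb).
    unfold Rg in *. simpl Sm. lra.
Qed.

Lemma PP_cauchy beta x : 2 <= beta ->
  forall eps, 0 < eps -> exists N, forall p q, (N <= p)%nat -> (N <= q)%nat ->
    Cmod (PP beta x p - PP beta x q) < eps.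
Proof.
  intros Hb eps He.
  set (M := exp (2 * Rabs x) * Rabs x).
  assert (HM: 0 <= M) by (unfold M; pose proof (exp_pos (2*Rabs x)); pose proof (Rabs_pos x); nra).
  destruct (archimed_cor1 (eps / (M + 1))) as [N [HN1 HN2]].
  { apply Rdiv_lt_0_compat; lra. }
  exists N. intros p q Hp Hq.
  assert (Hgen: forall p q, (N <= q <= p)%nat -> Cmod (PP beta x p - PP beta x q) < eps).
  { intros p0 q0 Hpq.
    eapply Rle_lt_trans. apply PP_diff; auto; lia.
    fold M.
    pose proof (h2_tail q0 p0 ltac:(lia)).
    assert (0 < / INR p0) by (apply Rinv_0_lt_compat, INR_pos; lia).
    assert (/ INR q0 <= / INR N) by (apply Rinv_le_contravar; [apply INR_pos; lia| apply le_INR; lia]).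
    assert (Rg h2 q0 p0 < eps / (M+1)) by lra.
    assert (0 <= Rg h2 q0 p0).
    { unfold Rg. pose proof (S_split h2 q0 p0 ltac:(lia) (fun n _ => h2_nonneg n)). lra. }
    apply Rle_lt_trans with ((M+1) * Rg h2 q0 p0). nra.
    replace eps with ((M+1) * (eps / (M+1))) by (field; lra).
    apply Rmult_lt_compat_l; lra. }
  destruct (Nat.le_ge_cases q p).
  - apply Hgen; lia.
  - replace (PP beta x p - PP beta x q)%C with (- (PP beta x q - PP beta x p))%C by ring.
    rewrite Cmod_opp. apply Hgen; lia.
Qed.


Lemma lim_close (u : nat -> C) :
  (forall eps, 0 < eps -> exists N, forall p q, (N <= p)%nat -> (N <= q)%nat -> Cmod (u p - u q) < eps) ->
  forall eps, 0 < eps -> exists N, forall n, (N <= n)%nat ->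
   Cmod (u n - @lim (CompleteNormedModule.CompleteSpace _ C_CompleteNormedModule)
    (filtermap u eventually)) < eps.
Proof.
  intros Hc eps Heps.
  set (F := filtermap u eventually).
  set (L := @lim (CompleteNormedModule.CompleteSpace _ C_CompleteNormedModule) F).
  assert (HF: @cauchy (CompleteNormedModule.CompleteSpace _ C_CompleteNormedModule) F).
  { intros e. destruct (Hc e (cond_pos e)) as [N HN].
    exists (u N). unfold F, filtermap. exists N. intros n Hn.
    change (@ball (NormedModule.UniformSpace _ C_NormedModule) (u N) e (u n)). apply norm_compat1. change (Cmod (u n - u N) < e). apply HN; lia. }
  assert (Hnf: 0 < @norm_factor _ C_NormedModule) by apply norm_factor_gt_0.
  assert (He: 0 < eps / (@norm_factor _ C_NormedModule)) by (apply Rdiv_lt_0_compat; lra).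
  pose proof (@complete_cauchy (CompleteNormedModule.CompleteSpace _ C_CompleteNormedModule) F _ HF (mkposreal _ He)) as H.
  destruct H as [N HN]. exists N. intros n Hn. specialize (HN n Hn).
  change (@ball (NormedModule.UniformSpace _ C_NormedModule) L (mkposreal _ He) (u n)) in HN.
  apply norm_compat2 in HN. simpl in HN.
  change (@norm _ C_NormedModule (minus (u n) L) < eps).
  eapply Rlt_le_trans; [exact HN|]. right. field. lra.
Qed.

Lemma Cmod_rev_tri (z w : C) : Rabs (Cmod z - Cmod w) <= Cmod (z - w).
Proof.
    apply Rabs_le. split.
    - pose proof (Cmod_triangle (w - z) z).
      replace (w - z + z)%C with w in H by ring.
      replace (w - z)%C with (- (z - w))%C in H by ring.
      rewrite Cmod_opp in H. lra.
    - pose proof (Cmod_triangle (z - w) w).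
      replace (z - w + w)%C with z in H by ring.
      lra.
Qed.

Lemma transfer beta x Lb Ub N1 : 2 <= beta ->
  (forall N, (N1 <= N)%nat -> Lb <= Sm (gg beta x) N <= Ub) ->
  Lb <= ln (Cmod (E_beta beta (RtoC x))) <= Ub.
Proof.
  intros Hb H.
  set (e := Cmod (E_beta beta (RtoC x))).
  assert (Hclose: forall eps, 0 < eps -> exists N, (N1 <= N)%nat /\ Rabs (exp (Sm (gg beta x) N) - e) < eps).
  { intros eps Heps. destruct (lim_close (PP beta x) (PP_cauchy beta x Hb) eps Heps) as [N0 HN0].
    exists (max N0 N1). split. lia.
    specialize (HN0 (max N0 N1) ltac:(lia)).
    rewrite <- PP_mod. unfold e, E_beta. fold (PP beta x).
    eapply Rle_lt_trans; [|exact HN0].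
    set (w := @lim (CompleteNormedModule.CompleteSpace _ C_CompleteNormedModule) (filtermap (PP beta x) eventually)).
    change (Rabs (Cmod (PP beta x (max N0 N1)) - Cmod w) <= Cmod (PP beta x (max N0 N1) - w)).
    apply Cmod_rev_tri. }
  assert (Hlo: exp Lb <= e).
  { destruct (Rle_lt_dec (exp Lb) e) as [h|h]; auto.
    destruct (Hclose (exp Lb - e) ltac:(lra)) as [N [HN1 HN2]].
    destruct (H N HN1) as [h1 h2]. pose proof (exp_le' _ _ h1).
    apply Rabs_def2 in HN2. lra. }
  assert (Hhi: e <= exp Ub).
  { destruct (Rle_lt_dec e (exp Ub)) as [h|h]; auto.
    destruct (Hclose (e - exp Ub) ltac:(lra)) as [N [HN1 HN2]].
    destruct (H N HN1) as [h1 h2]. pose proof (exp_le' _ _ h2).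
    apply Rabs_def2 in HN2. lra. }
  pose proof (exp_pos Lb).
  split.
  - rewrite <- (ln_exp Lb). apply ln_le'; lra.
  - rewrite <- (ln_exp Ub). apply ln_le'; lra.
Qed.


Lemma ln_sqrt2 : ln (sqrt 2) = ln 2 / 2.
Proof.
  assert (0 < sqrt 2) by (apply sqrt_lt_R0; lra).
  assert (ln 2 = ln (sqrt 2 * sqrt 2)) by (rewrite sqrt_sqrt; lra).
  rewrite ln_mult in H0 by lra. lra.
Qed.

Lemma ln_frac u v w : 0 < u -> 0 < v -> 0 < w -> ln (u * v / w^2) = ln u + ln v - 2 * ln w.
Proof.
  intros. unfold Rdiv. rewrite !ln_mult; try apply Rinv_0_lt_compat; try apply pow_lt; try nra.
  rewrite ln_Rinv by (apply pow_lt; lra). rewrite ln_pow by lra. simpl. ring.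
Qed.

Lemma sqrt_le_plus_inv a : 0 < a -> sqrt (a^2 + 1) <= a + / a.
Proof.
  intros Ha. assert (0 < / a) by (apply Rinv_0_lt_compat; lra).
  rewrite <- (sqrt_pow2 (a + / a)) by lra. apply sqrt_le_1_alt.
  replace ((a + / a)^2) with (a^2 + 2 + (/a)^2) by (field; lra).
  pose proof (pow2_ge_0 (/a)). lra.
Qed.

Lemma gg_neg_ge0 beta t n : 0 <= t -> (1 <= n)%nat -> 0 <= gg beta (-t) n.
Proof.
  intros Ht Hn. unfold gg. apply ln_nonneg. unfold rr.
  pose proof (av_pos beta n Hn).
  assert (0 < sqrt (av beta n ^ 2 + 1)) by (apply sqrt_lt_R0; pose proof (pow2_ge_0 (av beta n)); lra).
  apply Rmult_le_reg_r with (sqrt (av beta n ^ 2 + 1)); auto.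
  unfold Rdiv. rewrite Rmult_assoc, Rinv_l, Rmult_1_l, Rmult_1_r by lra.
  apply sqrt_le_1_alt. nra.
Qed.

Lemma gg_neg_big beta t n : (1 <= n)%nat -> 1 <= av beta n -> av beta n <= t ->
  ln 2 / 2 <= gg beta (-t) n.
Proof.
  intros Hn H1 H2. unfold gg. rewrite <- ln_sqrt2. apply ln_le'. apply sqrt_lt_R0; lra.
  unfold rr. set (a := av beta n) in *.
  assert (0 < sqrt (a ^ 2 + 1)) by (apply sqrt_lt_R0; pose proof (pow2_ge_0 a); lra).
  apply Rmult_le_reg_r with (sqrt (a ^ 2 + 1)); auto.
  unfold Rdiv. rewrite Rmult_assoc, Rinv_l, Rmult_1_r by lra.
  rewrite <- sqrt_mult_alt by lra. apply sqrt_le_1_alt. nra.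
Qed.

Lemma gg_pos_main beta t n : 2 <= beta -> (1 <= n)%nat -> av beta n <> t ->
  ln (Rabs (1 - t / av beta n)) - h2 n <= gg beta t n.
Proof.
  intros Hb Hn Hne. unfold gg, rr. set (a := av beta n) in *.
  assert (Ha: 0 < a) by (apply av_pos; auto).
  assert (Hsq: INR n ^2 <= a) by (apply av_ge_sq; auto).
  assert (Hn1: 1 <= INR n) by (apply INR_ge1; auto).
  assert (Hs: 0 < sqrt (a^2+1)) by (apply sqrt_lt_R0; pose proof (pow2_ge_0 a); lra).
  assert (Hat: 0 < Rabs (a - t)) by (apply Rabs_pos_lt; lra).
  assert (E1: Rabs (1 - t/a) = Rabs (a - t) / a).
  { replace (1 - t/a) with ((a - t) / a) by (field; lra). unfold Rdiv.
    rewrite Rabs_mult, Rabs_inv, (Rabs_right a); lra. }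
  rewrite E1.
  assert (Hinv: 0 < / a) by (apply Rinv_0_lt_compat; lra).
  assert (Hr: Rabs (a - t) / (a * (1 + / a^2)) <= sqrt ((a - t) ^ 2 + 1) / sqrt (a ^ 2 + 1)).
  { unfold Rdiv. apply Rmult_le_compat. left; auto. left; apply Rinv_0_lt_compat.
    pose proof (pow2_ge_0 (/a)). apply Rmult_lt_0_compat; auto.
    assert (0 < / a^2) by (apply Rinv_0_lt_compat, pow_lt; lra). lra.
    rewrite <- sqrt_Rsqr_abs. apply sqrt_le_1_alt. unfold Rsqr. simpl. lra.
    apply Rinv_le_contravar. auto.
    replace (a * (1 + / a^2)) with (a + / a) by (field; lra). apply sqrt_le_plus_inv; auto. }
  assert (H1a: 0 < 1 + / a^2) by (assert (0 < / a^2) by (apply Rinv_0_lt_compat, pow_lt; lra); lra).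
  eapply Rle_trans; [| apply ln_le'; [| exact Hr]].
  2: { apply Rdiv_lt_0_compat; auto. apply Rmult_lt_0_compat; lra. }
  unfold Rdiv at 2. rewrite Rinv_mult, <- Rmult_assoc.
  rewrite ln_mult; auto. 2: apply Rdiv_lt_0_compat; auto. 2: apply Rinv_0_lt_compat; auto.
  rewrite ln_Rinv by auto.
  assert (ln (1 + / a^2) <= h2 n).
  { eapply Rle_trans. apply ln1p_le. left; apply Rinv_0_lt_compat, pow_lt; lra.
    unfold h2. apply Rinv_le_contravar. apply pow_lt; lra.
    assert (INR n <= INR n ^ 2) by (simpl; nra). assert (INR n <= a) by lra. apply pow_incr. lra. }
  lra.
Qed.

Lemma gg_pos_J beta t n : 2 <= beta -> (1 <= n)%nat ->
  - (ln 2 + beta * ln (INR n)) <= gg beta t n.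
Proof.
  intros Hb Hn. unfold gg, rr. set (a := av beta n) in *.
  assert (Ha: 0 < a) by (apply av_pos; auto).
  assert (Hsq: INR n ^2 <= a) by (apply av_ge_sq; auto).
  assert (Hn1: 1 <= INR n) by (apply INR_ge1; auto).
  assert (INR n <= INR n ^ 2) by (simpl; nra). assert (Ha1: 1 <= a) by lra.
  assert (Hs: 0 < sqrt (a^2+1)) by (apply sqrt_lt_R0; pose proof (pow2_ge_0 a); lra).
  assert (Hle: sqrt (a^2+1) <= 2 * a).
  { eapply Rle_trans. apply sqrt_le_plus_inv; auto.
    assert (/ a <= 1) by (rewrite <- Rinv_1; apply Rinv_le_contravar; lra). lra. }
  assert (Hr: / (2 * a) <= sqrt ((a - t) ^ 2 + 1) / sqrt (a ^ 2 + 1)).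
  { assert (1 <= sqrt ((a - t) ^ 2 + 1)).
    { apply Rle_trans with (sqrt 1). rewrite sqrt_1; lra.
      apply sqrt_le_1_alt. pose proof (pow2_ge_0 (a-t)). lra. }
    assert (/ (2*a) <= / sqrt (a^2+1)) by (apply Rinv_le_contravar; auto).
    assert (0 < / sqrt (a^2+1)) by (apply Rinv_0_lt_compat; auto).
    unfold Rdiv. nra. }
  eapply Rle_trans; [| apply ln_le'; [| exact Hr]].
  2: apply Rinv_0_lt_compat; lra.
  rewrite ln_Rinv by lra. rewrite ln_mult by lra.
  unfold a, av, Rpower. rewrite ln_exp. lra.
Qed.


Lemma tav beta L n : (1 <= n)%nat ->
  exp (beta * L) / av beta n = exp (beta * (L - ln (INR n))).
Proof.
  intros Hn. unfold av, Rpower. unfold Rdiv. rewrite <- exp_Ropp, <- exp_plus. f_equal. ring.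
Qed.

Lemma sq_exp L n : (1 <= n)%nat -> exp (2 * (L - ln (INR n))) = exp L ^ 2 / INR n ^ 2.
Proof.
  intros Hn. assert (0 < INR n) by (apply INR_pos; auto).
  replace (2 * (L - ln (INR n))) with ((L + L) + - (ln (INR n) + ln (INR n))) by ring.
  rewrite exp_plus, exp_Ropp, !exp_plus, exp_ln by lra. field. lra.
Qed.

Lemma Q1 beta L n : 2 <= beta -> (1 <= n)%nat -> INR n <= exp L ->
  exp L ^ 2 / INR n ^ 2 <= exp (beta * L) / av beta n.
Proof.
  intros Hb Hn H. rewrite tav, <- sq_exp by auto. apply exp_le'.
  assert (ln (INR n) <= L). { rewrite <- (ln_exp L). apply ln_le'; auto. apply INR_pos; auto. }
  nra.
Qed.

Lemma Q2 beta L n : 2 <= beta -> (1 <= n)%nat -> exp L <= INR n ->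
  exp (beta * L) / av beta n <= exp L ^ 2 / INR n ^ 2.
Proof.
  intros Hb Hn H. rewrite tav, <- sq_exp by auto. apply exp_le'.
  assert (L <= ln (INR n)). { rewrite <- (ln_exp L). apply ln_le'; auto. apply exp_pos. }
  nra.
Qed.

Definition del0 beta := (1 - exp (- ((beta - 2) * ln 2))) / 16.

Lemma del0_pos beta : 2 < beta -> 0 < del0 beta.
Proof.
  intros Hb. unfold del0. assert (0 < ln 2) by (apply ln_pos'; lra).
  assert (exp (- ((beta - 2) * ln 2)) < 1).
  { rewrite <- exp_0. apply exp_increasing. nra. }
  lra.
Qed.

Lemma del0_le1 beta : 2 < beta -> del0 beta <= 1.
Proof. intros Hb. unfold del0. pose proof (exp_pos (- ((beta - 2) * ln 2))). lra. Qed.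

Lemma Q3 beta L n : 2 <= beta -> (1 <= n)%nat -> 2 * exp L <= INR n -> INR n <= 4 * exp L ->
  del0 beta <= exp L ^ 2 / INR n ^ 2 - exp (beta * L) / av beta n.
Proof.
  intros Hb Hn H1 H2. rewrite tav, <- sq_exp by auto.
  set (d := L - ln (INR n)).
  assert (Hn0: 0 < INR n) by (apply INR_pos; auto).
  assert (Hd: d <= - ln 2).
  { unfold d. assert (ln (2 * exp L) <= ln (INR n)) by (apply ln_le'; auto; pose proof (exp_pos L); lra).
    rewrite ln_mult, ln_exp in H by (try lra; apply exp_pos). lra. }
  assert (Hw: / 16 <= exp (2 * d)).
  { unfold d. rewrite sq_exp by auto. 
    apply Rle_trans with (exp L ^ 2 / (4 * exp L)^2).
    pose proof (exp_pos L). right. field. lra.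
    unfold Rdiv. apply Rmult_le_compat_l. apply pow2_ge_0.
    apply Rinv_le_contravar. apply pow_lt; auto. apply pow_incr; lra. }
  replace (beta * d) with (2 * d + (beta - 2) * d) by ring.
  rewrite exp_plus.
  assert (exp ((beta - 2) * d) <= exp (- ((beta - 2) * ln 2))) by (apply exp_le'; nra).
  unfold del0.
  assert (0 <= 1 - exp (- ((beta - 2) * ln 2))).
  { assert (0 < ln 2) by (apply ln_pos'; lra).
    assert (exp (- ((beta - 2) * ln 2)) <= 1) by (rewrite <- exp_0; apply exp_le'; nra). lra. }
  pose proof (exp_pos (2*d)). nra.
Qed.


Lemma k_ge1 k y : INR k <= y < INR k + 1 -> 2 <= y -> (2 <= k)%nat.
Proof.
  intros [H1 H2] Hy. assert (INR 1 < INR k) by (simpl; lra). apply INR_lt in H. lia.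
Qed.

Lemma upper_sum beta L k x N : 2 < beta -> Rabs x = exp (beta * L) ->
  INR k <= exp L < INR k + 1 -> 2 <= exp L ->
  Sm (gg beta x) N <= (ln 2 + 2 * beta + 2) * exp L.
Proof.
  intros Hb Hx Hk Hy.
  pose proof (k_ge1 k (exp L) Hk Hy) as Hk2.
  set (y := exp L) in *. set (t := exp (beta * L)) in *.
  assert (Hk0: 0 < INR k) by (apply INR_pos; lia).
  set (u := fun n => ln (1 + t / av beta n)).
  assert (Hu0: forall n, (1 <= n)%nat -> 0 <= u n).
  { intros n Hn. unfold u. apply ln_nonneg. pose proof (av_pos beta n Hn).
    assert (0 <= t / av beta n) by (apply Rdiv_le_0_compat; [unfold t; left; apply exp_pos | lra]). lra. }
  assert (S1: Sm (gg beta x) N <= Sm u N).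
  { apply S_le. intros n Hn. unfold gg, u. apply ln_le'. apply rr_pos.
    rewrite <- Hx. apply rr_upper. lia. }
  assert (S2: Sm u N <= Sm u (max N k)).
  { apply S_split. lia. intros n Hn. apply Hu0. lia. }
  assert (S3: Sm u k <= INR k * ln 2 + beta * (INR k * L - lf k)).
  { apply Rle_trans with (Sm (fun n => ln 2 + beta * (L - ln (INR n))) k).
    - apply S_le. intros n Hn. unfold u.
      assert (Hn0: 0 < INR n) by (apply INR_pos; lia).
      assert (INR n <= y) by (apply Rle_trans with (INR k); [apply le_INR; lia | lra]).
      pose proof (Q1 beta L n ltac:(lra) ltac:(lia) H).
      assert (1 <= y^2 / INR n^2).
      { apply Rmult_le_reg_r with (INR n ^2). apply pow_lt; lra.
        unfold Rdiv. rewrite Rmult_assoc, Rinv_l, Rmult_1_l, Rmult_1_r. apply pow_incr; lra.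
        apply pow_nonzero; lra. }
      fold y t in H0.
      apply Rle_trans with (ln (2 * (t / av beta n))).
      + apply ln_le'. pose proof (av_pos beta n ltac:(lia)).
        assert (0 <= t / av beta n) by (apply Rdiv_le_0_compat; [unfold t; left; apply exp_pos | lra]). lra.
        lra.
      + rewrite ln_mult by lra. unfold t. rewrite tav, ln_exp by lia. lra.
    - rewrite S_plus, S_const, S_scal, S_minus, S_const. unfold lf. lra. }
  assert (S4: INR k * (L - ln (INR k)) <= 1).
  { assert (L - ln (INR k) <= y / INR k - 1).
    { replace (L - ln (INR k)) with (ln (y / INR k)).
      apply ln_le_sub1. apply Rdiv_lt_0_compat; unfold y; [apply exp_pos|lra].
      unfold Rdiv. rewrite ln_mult, ln_Rinv; unfold y; try rewrite ln_exp; try lra.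
      apply exp_pos. apply Rinv_0_lt_compat; lra. }
    assert (INR k * (y / INR k - 1) = y - INR k) by (field; lra).
    apply Rle_trans with (INR k * (y / INR k - 1)). apply Rmult_le_compat_l; lra. lra. }
  pose proof (lf_lower k).
  assert (S5: Rg u k (max N k) <= y^2 * (/ INR k)).
  { apply Rle_trans with (Rg (fun n => y^2 * h2 n) k (max N k)).
    - apply Rg_le. lia. intros n Hn. unfold u.
      assert (Hn0: 0 < INR n) by (apply INR_pos; lia).
      assert (y <= INR n).
      { apply Rle_trans with (INR k + 1). lra. rewrite <- S_INR. apply le_INR; lia. }
      pose proof (Q2 beta L n ltac:(lra) ltac:(lia) H0). fold y t in H1.
      eapply Rle_trans. apply ln1p_le. apply Rdiv_le_0_compat. unfold t; left; apply exp_pos.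
      apply av_pos; lia.
      unfold h2. unfold Rdiv in H1. lra.
    - rewrite Rg_scal. pose proof (h2_tail k (max N k) ltac:(lia)).
      assert (0 < / INR (max N k)) by (apply Rinv_0_lt_compat, INR_pos; lia).
      pose proof (pow2_ge_0 y). nra. }
  assert (S6: y^2 * / INR k <= 2 * y).
  { apply Rmult_le_reg_r with (INR k). lra.
    rewrite Rmult_assoc, Rinv_l, Rmult_1_r by lra. simpl. nra. }
  unfold Rg in S5.
  assert (0 < ln 2) by (apply ln_pos'; lra).
  assert (INR k * ln 2 <= y * ln 2) by (apply Rmult_le_compat_r; lra).
  nra.
Qed.

Lemma neg_sum beta L k N : 2 < beta ->
  INR k <= exp L < INR k + 1 -> 2 <= exp L -> (k <= N)%nat ->
  ln 2 / 4 * exp L <= Sm (gg beta (- exp (beta * L))) N.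
Proof.
  intros Hb Hk Hy HN.
  pose proof (k_ge1 k (exp L) Hk Hy) as Hk2.
  set (y := exp L) in *. set (t := exp (beta * L)) in *.
  assert (Ht: 0 <= t) by (unfold t; left; apply exp_pos).
  assert (S1: Sm (gg beta (-t)) k <= Sm (gg beta (-t)) N).
  { apply S_split; auto. intros n Hn. apply gg_neg_ge0; auto; lia. }
  assert (S2: Sm (fun _ => ln 2 / 2) k <= Sm (gg beta (-t)) k).
  { apply S_le. intros n Hn. apply gg_neg_big. lia.
    - pose proof (av_ge_sq beta n ltac:(lra) ltac:(lia)). pose proof (INR_ge1 n ltac:(lia)).
      assert (1 <= INR n ^ 2) by (simpl; nra). lra.
    - assert (Hn0: 0 < INR n) by (apply INR_pos; lia).
      assert (INR n <= y) by (apply Rle_trans with (INR k); [apply le_INR; lia | lra]).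
      pose proof (Q1 beta L n ltac:(lra) ltac:(lia) H). fold y t in H0.
      assert (1 <= y^2 / INR n^2).
      { apply Rmult_le_reg_r with (INR n ^2). apply pow_lt; lra.
        unfold Rdiv. rewrite Rmult_assoc, Rinv_l, Rmult_1_l, Rmult_1_r. apply pow_incr; lra.
        apply pow_nonzero; lra. }
      pose proof (av_pos beta n ltac:(lia)).
      assert (1 <= t / av beta n) by lra.
      apply Rmult_le_reg_r with (/ av beta n). apply Rinv_0_lt_compat; lra.
      rewrite Rinv_r by lra. unfold Rdiv in *. lra. }
  rewrite S_const in S2.
  assert (0 < ln 2) by (apply ln_pos'; lra).
  assert (y / 2 <= INR k) by lra.
  nra.
Qed.


Lemma sq_ratio_ge1 y n : 0 < INR n -> INR n <= y -> 1 <= y^2 / INR n^2.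
Proof.
  intros Hn H. apply Rmult_le_reg_r with (INR n ^2). apply pow_lt; lra.
  unfold Rdiv. rewrite Rmult_assoc, Rinv_l, Rmult_1_l, Rmult_1_r. apply pow_incr; lra.
  apply pow_nonzero; lra.
Qed.

Section Pos.
Variables (beta L : R) (k : nat).
Hypothesis Hb : 2 < beta.
Hypothesis Hk : INR k <= exp L < INR k + 1.
Hypothesis Hy : 2 <= exp L.

Let y := exp L.
Let t := exp (beta * L).

Lemma P1 n : (1 <= n <= k - 1)%nat -> Lq1 k n - h2 n <= gg beta t n.
Proof.
  intros Hn.
  assert (Hn0: 0 < INR n) by (apply INR_pos; lia).
  assert (Hnk: INR n + 1 <= INR k) by (rewrite <- S_INR; apply le_INR; lia).
  assert (INR n <= y) by (unfold y; lra).
  pose proof (Q1 beta L n ltac:(lra) ltac:(lia) H). fold y t in H0.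
  pose proof (av_pos beta n ltac:(lia)).
  assert (Hkk: INR k ^2 / INR n ^2 <= y^2 / INR n^2).
  { unfold Rdiv. apply Rmult_le_compat_r. left; apply Rinv_0_lt_compat, pow_lt; lra.
    apply pow_incr. unfold y in *. lra. }
  assert (Hq: INR k ^2 / INR n^2 - 1 = (INR k - INR n) * (INR k + INR n) / INR n ^2) by (field; lra).
  assert (Hq0: 0 < (INR k - INR n) * (INR k + INR n) / INR n ^2).
  { apply Rdiv_lt_0_compat. apply Rmult_lt_0_compat; lra. apply pow_lt; lra. }
  assert (Hne: av beta n <> t).
  { intros He. rewrite He in H0. unfold Rdiv in H0. rewrite Rinv_r in H0 by (unfold t; apply Rgt_not_eq, exp_pos). lra. }
  eapply Rle_trans; [| apply gg_pos_main; [lra | lia | exact Hne]].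
  unfold Lq1. rewrite <- ln_frac by lra.
  apply Rplus_le_compat_r. apply ln_le'; auto.
  rewrite Rabs_left1 by lra. lra.
Qed.

Lemma P2 n : (k + 2 <= n)%nat ->
  (1 - t / av beta n) >= (INR n - INR (k+1)) * (INR n + INR (k+1)) / INR n ^ 2 /\
  0 < (INR n - INR (k+1)) * (INR n + INR (k+1)) / INR n ^ 2 <= 1.
Proof.
  intros Hn.
  assert (Hn0: 0 < INR n) by (apply INR_pos; lia).
  assert (Hm: INR (k+1) + 1 <= INR n) by (rewrite <- S_INR; apply le_INR; lia).
  assert (Hm0: 0 < INR (k+1)) by (apply INR_pos; lia).
  assert (Hym: y <= INR (k+1)) by (rewrite plus_INR; simpl; unfold y; lra).
  assert (y <= INR n) by lra.
  pose proof (Q2 beta L n ltac:(lra) ltac:(lia) H). fold y t in H0.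
  assert (y^2 / INR n^2 <= INR (k+1)^2 / INR n^2).
  { unfold Rdiv. apply Rmult_le_compat_r. left; apply Rinv_0_lt_compat, pow_lt; lra.
    apply pow_incr. unfold y in *; split; [left; apply exp_pos|lra]. }
  assert (Hq: 1 - INR (k+1) ^2 / INR n^2 = (INR n - INR (k+1)) * (INR n + INR (k+1)) / INR n ^2) by (field; lra).
  split. lra. split.
  apply Rdiv_lt_0_compat. apply Rmult_lt_0_compat; lra. apply pow_lt; lra.
  rewrite <- Hq. assert (0 <= INR (k+1) ^2 / INR n^2).
  { apply Rdiv_le_0_compat. apply pow2_ge_0. apply pow_lt; lra. } lra.
Qed.

Lemma P2' n : (k + 2 <= n)%nat -> Lq2 (k+1) n - h2 n <= gg beta t n.
Proof.
  intros Hn. destruct (P2 n Hn) as [H1 [H2 H3]].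
  assert (Hn0: 0 < INR n) by (apply INR_pos; lia).
  assert (Hm: INR (k+1) + 1 <= INR n) by (rewrite <- S_INR; apply le_INR; lia).
  assert (Hm0: 0 < INR (k+1)) by (apply INR_pos; lia).
  assert (Hne: av beta n <> t).
  { intros He. rewrite He in H1. unfold Rdiv in H1. rewrite Rinv_r in H1 by (unfold t; apply Rgt_not_eq, exp_pos). lra. }
  eapply Rle_trans; [| apply gg_pos_main; [lra | lia | exact Hne]].
  unfold Lq2. rewrite <- ln_frac by lra.
  apply Rplus_le_compat_r. apply ln_le'; auto.
  rewrite Rabs_right by lra. lra.
Qed.

Lemma P3 n : (2 * k + 2 <= n <= 4 * k)%nat ->
  Lq2 (k+1) n + ln (1 + del0 beta) - h2 n <= gg beta t n.
Proof.
  intros Hn. destruct (P2 n ltac:(lia)) as [H1 [H2 H3]].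
  assert (Hn0: 0 < INR n) by (apply INR_pos; lia).
  assert (Hm: INR (k+1) + 1 <= INR n) by (rewrite <- S_INR; apply le_INR; lia).
  assert (Hm0: 0 < INR (k+1)) by (apply INR_pos; lia).
  assert (Hd: 2 * y <= INR n).
  { apply Rle_trans with (INR (2 * k + 2)). rewrite plus_INR, mult_INR. simpl. unfold y. lra.
    apply le_INR; lia. }
  assert (Hd2: INR n <= 4 * y).
  { apply Rle_trans with (INR (4 * k)). apply le_INR; lia. rewrite mult_INR. simpl. unfold y. lra. }
  pose proof (Q3 beta L n ltac:(lra) ltac:(lia) Hd Hd2). fold y t in H.
  assert (y <= INR n) by (unfold y in *; pose proof (exp_pos L); lra).
  pose proof (Q2 beta L n ltac:(lra) ltac:(lia) H0). fold y t in H4.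
  set (q := (INR n - INR (k + 1)) * (INR n + INR (k + 1)) / INR n ^ 2) in *.
  assert (Hyq: y^2 / INR n^2 <= INR (k+1)^2 / INR n^2).
  { unfold Rdiv. apply Rmult_le_compat_r. left; apply Rinv_0_lt_compat, pow_lt; lra.
    apply pow_incr. unfold y; split; [left; apply exp_pos|]. rewrite plus_INR; simpl; unfold y in *; lra. }
  assert (Hq: 1 - INR (k+1) ^2 / INR n^2 = q) by (unfold q; field; lra).
  pose proof (del0_pos beta Hb). pose proof (del0_le1 beta Hb).
  assert (Hge: q * (1 + del0 beta) <= 1 - t / av beta n) by nra.
  assert (Hne: av beta n <> t).
  { intros He. rewrite He in Hge. unfold Rdiv in Hge. rewrite Rinv_r in Hge by (unfold t; apply Rgt_not_eq, exp_pos). nra. }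
  eapply Rle_trans; [| apply gg_pos_main; [lra | lia | exact Hne]].
  unfold Lq2. rewrite <- ln_frac by lra. fold q.
  rewrite <- ln_mult by lra.
  apply Rplus_le_compat_r. apply ln_le'. nra.
  rewrite Rabs_right by nra. lra.
Qed.

Lemma pos_sum N : (4 * k <= N)%nat ->
  -(3 * ln 2) + (INR (4*k) - INR (2*k+1)) * ln (1 + del0 beta) - 2
   - (ln 2 + beta * L) - (ln 2 + beta * (ln 2 + L)) <= Sm (gg beta t) N.
Proof.
  intros HN.
  pose proof (k_ge1 k (exp L) Hk Hy) as Hk2.
  set (D := ln (1 + del0 beta)).
  assert (Eq: Sm (gg beta t) (k+1) = Sm (gg beta t) (k-1) + gg beta t k + gg beta t (k+1)).
  { replace (k+1)%nat with (Datatypes.S (Datatypes.S (k-1))) at 1 by lia. simpl Sm.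
    replace (Datatypes.S (k-1)) with k by lia. replace (Datatypes.S k) with (k+1)%nat by lia. ring. }
  assert (B1: Sm (Lq1 k) (k-1) - Sm h2 (k-1) <= Sm (gg beta t) (k-1)).
  { rewrite <- S_minus. apply S_le. intros n Hn. apply P1. lia. }
  assert (Hk0: 0 < INR k) by (apply INR_pos; lia).
  assert (B2: -(ln 2 + beta * L) <= gg beta t k).
  { eapply Rle_trans; [| apply gg_pos_J; [lra|lia]].
    assert (ln (INR k) <= L) by (rewrite <- (ln_exp L); apply ln_le'; lra). nra. }
  assert (B3: -(ln 2 + beta * (ln 2 + L)) <= gg beta t (k+1)).
  { eapply Rle_trans; [| apply gg_pos_J; [lra|lia]].
    assert (ln (INR (k+1)) <= ln 2 + L).
    { rewrite <- (ln_exp L). rewrite <- ln_mult by (try lra; apply exp_pos).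
      apply ln_le'. apply INR_pos; lia. rewrite plus_INR. simpl. lra. }
    nra. }
  assert (B4: Rg (Lq2 (k+1)) (k+1) (2*k+1) - Rg h2 (k+1) (2*k+1) <= Rg (gg beta t) (k+1) (2*k+1)).
  { rewrite <- Rg_minus. apply Rg_le. lia. intros n Hn. apply P2'. lia. }
  assert (B5: Rg (Lq2 (k+1)) (2*k+1) (4*k) + (INR (4*k) - INR (2*k+1)) * D - Rg h2 (2*k+1) (4*k)
              <= Rg (gg beta t) (2*k+1) (4*k)).
  { apply Rle_trans with (Rg (fun n => Lq2 (k+1) n + D - h2 n) (2*k+1) (4*k)).
    - unfold Rg. rewrite !S_minus, !S_plus, !S_const. lra.
    - apply Rg_le. lia. intros n Hn. apply P3. lia. }
  assert (B6: Rg (Lq2 (k+1)) (4*k) N - Rg h2 (4*k) N <= Rg (gg beta t) (4*k) N).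
  { rewrite <- Rg_minus. apply Rg_le. lia. intros n Hn. apply P2'. lia. }
  pose proof (fact_comb k N ltac:(lia) ltac:(lia)) as FC.
  assert (H2s: Sm h2 (k-1) <= Sm h2 (k+1)) by (apply S_split; [lia| intros; apply h2_nonneg]).
  pose proof (h2_total N).
  unfold Rg in *. lra.
Qed.

End Pos.


Lemma floor_ex y : 0 <= y -> exists k : nat, INR k <= y < INR k + 1.
Proof.
  intros Hy. destruct (archimed y) as [H1 H2].
  assert (Hz: (0 < up y)%Z) by (apply lt_IZR; lra).
  exists (Z.to_nat (up y - 1)).
  rewrite INR_IZR_INZ, Z2Nat.id by lia. rewrite minus_IZR. simpl. lra.
Qed.

Lemma ln_le_2sqrt y : 0 < y -> ln y <= 2 * sqrt y.
Proof.
  intros Hy. assert (Hs: 0 < sqrt y) by (apply sqrt_lt_R0; lra).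
  assert (ln y = 2 * ln (sqrt y)).
  { rewrite <- (sqrt_sqrt y) at 1 by lra. rewrite ln_mult by lra. ring. }
  pose proof (ln_le_sub1 (sqrt y) Hs). lra.
Qed.

Theorem lemma5p2 (beta : R) (hbeta : 2 < beta) :
  exists C1 C2 R0 : R,
    0 < C1 /\ C1 <= C2 /\ 0 < R0 /\
    forall x : R, R0 < Rabs x ->
      C1 * Rpower (Rabs x) (1 / beta) <= ln (Cmod (E_beta beta (RtoC x))) /\
      ln (Cmod (E_beta beta (RtoC x))) <= C2 * Rpower (Rabs x) (1 / beta).
Proof.
  set (Dl := ln (1 + del0 beta)).
  pose proof (del0_pos beta hbeta) as Hd0.
  assert (Hd1: del0 beta <= / 16).
  { unfold del0. pose proof (exp_pos (- ((beta - 2) * ln 2))). lra. }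
  assert (HD: 0 < Dl) by (apply ln_pos'; lra).
  assert (HD1: Dl <= / 16) by (pose proof (ln1p_le (del0 beta) ltac:(lra)); unfold Dl; lra).
  pose proof ln_lt_2 as Hl2.
  set (K0 := 5 * ln 2 + 2 + beta * ln 2).
  assert (HK0: 0 < K0) by (unfold K0; nra).
  set (s0 := 4 * (K0 + 4 * beta) / Dl + 1).
  assert (Hs0: 1 <= s0).
  { unfold s0. assert (0 < 4 * (K0 + 4 * beta) / Dl) by (apply Rdiv_lt_0_compat; lra). lra. }
  set (Y0 := Rmax 2 (s0^2)).
  assert (HY0: 2 <= Y0) by apply Rmax_l.
  assert (HY0': s0^2 <= Y0) by apply Rmax_r.
  exists (Dl / 4), (ln 2 + 2 * beta + 2), (exp (beta * ln Y0)).
  split. lra. split. lra. split. apply exp_pos.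
  intros x Hx.
  set (t := Rabs x) in *.
  assert (Ht: 0 < t) by (pose proof (exp_pos (beta * ln Y0)); lra).
  set (L := ln t / beta).
  assert (HtL: exp (beta * L) = t) by (unfold L; replace (beta * (ln t / beta)) with (ln t) by (field; lra); apply exp_ln; lra).
  assert (HyR: Rpower t (1 / beta) = exp L) by (unfold Rpower, L; f_equal; field; lra).
  rewrite HyR.
  assert (HLY: ln Y0 < L).
  { apply ln_increasing in Hx; [|apply exp_pos]. rewrite ln_exp in Hx.
    unfold L. apply Rmult_lt_reg_l with beta. lra.
    replace (beta * (ln t / beta)) with (ln t) by (field; lra). lra. }
  assert (HyY: Y0 < exp L) by (rewrite <- (exp_ln Y0) by lra; apply exp_increasing; auto).
  set (y := exp L) in *.
  assert (Hy2: 2 <= y) by lra.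
  destruct (floor_ex y ltac:(lra)) as [k Hk].
  pose proof (k_ge1 k y Hk Hy2) as Hk2.
  assert (Hgrow: K0 + 2 * beta * L <= Dl / 4 * y).
  { assert (HL: L <= 2 * sqrt y) by (unfold y; rewrite <- (ln_exp L) at 1; apply ln_le_2sqrt; apply exp_pos).
    fold y in HL.
    set (s := sqrt y) in *.
    assert (Hss: s * s = y) by (unfold s; apply sqrt_sqrt; lra).
    assert (Hs: s0 <= s).
    { unfold s. rewrite <- (sqrt_pow2 s0) by lra. apply sqrt_le_1_alt. lra. }
    assert (Dl / 4 * (s * s0) >= K0 + 4 * beta * s).
    { unfold s0. replace (Dl / 4 * (s * (4 * (K0 + 4 * beta) / Dl + 1)))
        with (s * (K0 + 4 * beta) + Dl / 4 * s) by (field; lra). nra. }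
    assert (Dl / 4 * (s * s0) <= Dl / 4 * (s * s)).
    { apply Rmult_le_compat_l. lra. apply Rmult_le_compat_l; lra. }
    nra. }
  assert (Hky: y / 2 <= INR k) by lra.
  destruct (Rle_or_lt 0 x) as [Hxp | Hxn].
  -
    assert (Hxt: x = exp (beta * L)) by (rewrite HtL; unfold t; rewrite Rabs_right; lra).
    apply (transfer beta x (Dl / 4 * y) ((ln 2 + 2 * beta + 2) * y) (4 * k)). lra.
    intros N HN. split.
    + rewrite Hxt. eapply Rle_trans; [| apply (pos_sum beta L k hbeta Hk Hy2 N HN)].
      assert (INR (4*k) - INR (2*k+1) = 2 * INR k - 1) by (rewrite plus_INR, !mult_INR; simpl; ring).
      rewrite H.
      assert (INR k * Dl <= (2 * INR k - 1) * Dl) by (apply Rmult_le_compat_r; lra).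
      assert (y / 2 * Dl <= INR k * Dl) by (apply Rmult_le_compat_r; lra).
      fold Dl. unfold K0 in Hgrow. lra.
    + apply (upper_sum beta L k x N hbeta); auto.
  -
    assert (Hxt: x = - exp (beta * L)) by (rewrite HtL; unfold t; rewrite Rabs_left; lra).
    apply (transfer beta x (Dl / 4 * y) ((ln 2 + 2 * beta + 2) * y) k). lra.
    intros N HN. split.
    + rewrite Hxt. eapply Rle_trans; [| apply (neg_sum beta L k N hbeta Hk Hy2 HN)].
      fold y. apply Rmult_le_compat_r. lra. lra.
    + apply (upper_sum beta L k x N hbeta); auto.
Qed.
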